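(* Let $p\in\mathbb{C}[z,z^{-1}]$ be non-zero. If $\operatorname{wd}(p)=0$, then $F(r_p^{(2)})(\lambda)=0$ for all $0\le\lambda<|\operatorname{lead}(p)|$ and $F(r_p^{(2)})(\lambda)=1$ for all $\lambda\ge|\operatorname{lead}(p)|$. If $\operatorname{wd}(p)\ge1$, then \[ F\bigl(r_p^{(2)}\bigr)(\lambda)\le\frac{8\sqrt3}{\sqrt{47}}\cdot\operatorname{wd}(p)\cdot\left(\frac{\lambda}{|\operatorname{lead}(p)|}\right)^{\frac{1}{\operatorname{wd}(p)}}\quad\text{for all }\lambda\in[0,\infty). \]
   Context: For non-zero $p=\sum_{n=n^-}^{n^+}c_nz^n\in\mathbb{C}[z,z^{-1}]$ with $c_{n^-}\neq0\neq c_{n^+}$, the width is $\operatorname{wd}(p)=n^+-n^-$ and the leading coefficient is $\operatorname{lead}(p)=c_{n^+}$. The operator $r_p^{(2)}\colon L^2(\mathbb{Z})\to L^2(\mathbb{Z})$ is multiplication by $p$, with spectral density function $F(r_p^{(2)})(\lambda)=\mu_{S^1}\bigl(\{z\in S^1:|p(z)|\le\lambda\}\bigr)$, $\mu_{S^1}$ the normalized Haar measure. *)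

(* Defs.v *)
From mathcomp Require Import all_boot all_order all_algebra.
From mathcomp Require Import all_classical all_reals all_analysis.
From mathcomp Require Import complex.
Set Implicit Arguments. Unset Strict Implicit. Unset Printing Implicit Defensive.
Import Order.TTheory GRing.Theory Num.Theory.
Local Open Scope ring_scope.
Local Open Scope classical_set_scope.

Section Laurent.
Variable R : realType.

(* A Laurent polynomial p in C[z,z^-1] is represented by a pair (n, q) with
   n : int and q : {poly R[i]}, standing for p(z) = z^n * q(z).
   Every Laurent polynomial has such a representation; the notions below
   (evaluation, zero-ness, width, leading coefficient) do not depend on the
   chosen representation. *)

Definition laurent_eval (n : int) (q : {poly R[i]}) (z : R[i]) : R[i] :=
  z ^ n * q.[z].

Definition low_index (q : {poly R[i]}) : nat := find (fun c => c != 0) q.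

(* width wd(p) = n^+ - n^-  (the shift n cancels) *)
Definition laurent_wd (q : {poly R[i]}) : nat := (size q).-1 - low_index q.

Definition laurent_lead (q : {poly R[i]}) : R[i] := lead_coef q.

Definition cabs (z : R[i]) : R := Normc.normc z.

Definition expi (t : R) : R[i] := (cos t +i* sin t)%C.

(* normalized Haar measure on S^1 (subsets of C are intersected with S^1):
   mu(A) = (1/(2 pi)) * Leb({t in [0, 2 pi) | e^{it} in A}) *)
Definition haar_S1 (A : set R[i]) : \bar R :=
  ((2 * pi)^-1)%:E *
  lebesgue_measure ([set t : R | (0 <= t < 2 * pi)%R] `&` (expi @^-1` A)).

(* spectral density function of r_p^{(2)}:
   F(lam) = mu_{S^1}({z in S^1 : |p(z)| <= lam}) *)
Definition spec_density (n : int) (q : {poly R[i]}) (lam : R) : \bar R :=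
  haar_S1 [set z | (cabs (laurent_eval n q z) <= lam)%R].

End Laurent.

(* Main.v *)
Require Import Defs.
From mathcomp Require Import all_boot all_order all_algebra.
From mathcomp Require Import all_classical all_reals all_analysis.
From mathcomp Require Import complex.
From mathcomp.algebra_tactics Require Import ring lra.
Import Order.TTheory GRing.Theory Num.Theory.
Import numFieldNormedType.Exports.
Local Open Scope ring_scope.
Local Open Scope classical_set_scope.
Local Open Scope complex_scope.

Section S.
Variable R : realType.

Lemma cont_from_deriv (f df : R -> R) :
  (forall x : R, is_derive x (1:R) f (df x)) -> continuous f.
Proof.
move=> Hd y; apply/differentiable_continuous/derivable1_diffP.
exact: ex_derive.
Qed.

Lemma mono_from_deriv (f df : R -> R) :
  (forall x : R, is_derive x (1:R) f (df x)) -> (forall x, 0 < x -> 0 <= df x) ->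
  forall x, 0 <= x -> f 0 <= f x.
Proof.
move=> Hd Hp x x0.
have der : forall y, derivable f y 1 by move=> y; exact: ex_derive.
apply: (@ger0_derive1_ndecry R f 0) => //.
- move=> y; rewrite in_itv /= andbT => y0.
  by rewrite derive1E derive_val; apply: Hp.
- by apply: continuous_subspaceT; apply: cont_from_deriv Hd.
Qed.

Lemma g1 (x : R) : 0 <= x -> sin x <= x.
Proof.
move=> x0.
have Hd : forall y : R, is_derive y (1:R) (fun x : R => x - sin x) (1 - cos y).
  move=> y; apply: is_derive_eq. done.
have := @mono_from_deriv _ _ Hd _ x x0.
rewrite /= sin0 subrr subr_ge0; apply.
by move=> y _; rewrite subr_ge0 cos_le1.
Qed.

Lemma g2 (x : R) : 0 <= x -> 1 - x ^+ 2 / 2 <= cos x.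
Proof.
move=> x0.
have Hd : forall y : R, is_derive y (1:R) (fun x : R => cos x - 1 + x ^+ 2 / 2) (y - sin y).
  move=> y; apply: is_derive_eq.
  rewrite !scaler0 !(addr0,subr0,add0r,scaler0) /GRing.scale /= ?mulr1.
  by field.
have := @mono_from_deriv _ _ Hd _ x x0.
rewrite /= cos0 subrr expr0n /= mul0r addr0.
move=> H; rewrite -subr_ge0; apply: le_trans (H _) _.
  by move=> y /ltW y0; rewrite subr_ge0 g1.
by rewrite le_eqVlt; apply/orP; left; apply/eqP; ring.
Qed.

Lemma g3 (x : R) : 0 <= x -> x - x ^+ 3 / 6 <= sin x.
Proof.
move=> x0.
have Hd : forall y : R, is_derive y (1:R) (fun x : R => sin x - x + x ^+ 3 / 6) (cos y - 1 + y ^+ 2 / 2).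
  move=> y; apply: is_derive_eq.
  rewrite !scaler0 !(addr0,subr0,add0r,scaler0) /GRing.scale /= ?mulr1.
  by field.
have := @mono_from_deriv _ _ Hd _ x x0.
rewrite /= sin0 subrr expr0n /= mul0r addr0.
move=> H; rewrite -subr_ge0; apply: le_trans (H _) _.
  by move=> y /ltW y0; have := @g2 y y0; lra.
by rewrite le_eqVlt; apply/orP; left; apply/eqP; ring.
Qed.

Lemma pi_ge52 : 5 / 2 <= (pi : R).
Proof.
have c0 : 0 < cos (5 / 4 : R).
  have := @g2 (5/4) ltac:(lra); lra.
rewrite leNgt; apply/negP => hp.
have h1 : (5 / 4 : R) \in `[0, pi]%R by rewrite in_itv /=; have := pi_ge2 R; lra.
have h2 : (pi / 2 : R) \in `[0, pi]%R by rewrite in_itv /=; have := pi_ge2 R; lra.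
have := ltr_cos h2 h1; rewrite cos_pihalf.
move=> h; have : pi / 2 < 5 / 4 :> R by lra.
rewrite -h; lra.
Qed.

Lemma sin1_ge : 5 / 6 <= sin (1 : R).
Proof. have := @g3 1 ltac:(lra); rewrite expr1n; lra. Qed.

Lemma sin_abs (w : R) : `|w| <= pi -> `|sin w| = sin `|w|.
Proof.
move=> hw; have [w0|w0] := leP 0 w.
  have hs : 0 <= sin w by apply: sin_ge0_pi; rewrite w0 -(ger0_norm w0).
  by rewrite (ger0_norm w0) (ger0_norm hs).
have hs : 0 <= sin (- w).
  by apply: sin_ge0_pi; rewrite oppr_ge0 (ltW w0) -(ltr0_norm w0).
rewrite (ltr0_norm w0); rewrite sinN in hs *.
by rewrite (ler0_norm _) // -oppr_ge0.
Qed.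

Lemma sin_small (w m : R) : `|w| < pi / 2 -> `|sin w| <= m -> m <= 1 / 2 ->
  `|w| <= 6 / 5 * m.
Proof.
move=> hw hs hm.
have hpi := pi_ge2 R.
rewrite sin_abs in hs; last by lra.
set u := `|w| in hw hs *.
have u0 : 0 <= u by rewrite normr_ge0.
have u1 : u < 1.
  rewrite ltNge; apply/negP => u1.
  have h1 : (1 : R) \in `[- (pi / 2), pi / 2]%R by rewrite in_itv /=; lra.
  have h2 : u \in `[- (pi / 2), pi / 2]%R by rewrite in_itv /=; lra.
  have : sin 1 <= sin u.
    by rewrite leNgt (ltr_sin h2 h1) -leNgt.
  have := sin1_ge; lra.
have := @g3 u u0.
have : u ^+ 3 <= u.
  have h3 : 0 <= u * (1 - u) by apply: mulr_ge0; lra.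
  have : 0 <= u * (1 - u) * (1 + u) by apply: mulr_ge0; lra.
  rewrite !exprS expr0; lra.
lra.
Qed.


Lemma chord (t s : R) : cabs (expi t - expi s) = 2 * `|sin ((t - s) / 2)|.
Proof.
set w := (t - s) / 2.
have tw : t - s = w *+ 2 by rewrite /w mulr2n; field.
have e1 := cos2Dsin2 t.
have e2 := cos2Dsin2 s.
have e3 := cosB t s.
have e4 := cos_mulr2n w.
have e5 := cos2Dsin2 w.
rewrite -tw in e4.
have -> : 2 * `|sin w| = Num.sqrt ((2 * sin w) ^+ 2).
  by rewrite sqrtr_sqr normrM ger0_norm.
rewrite /cabs /expi /=.
congr (Num.sqrt _).
rewrite e3 in e4; rewrite mulr2n in e4.
rewrite !expr2 in e1 e2 e4 e5 *. lra.
Qed.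


Lemma cabsE (z : R[i]) : `|z| = (cabs z)%:C.
Proof. by []. Qed.

Lemma cabs_expi (t : R) : cabs (expi t) = 1.
Proof.
rewrite /cabs /expi /Normc.normc.

by rewrite cos2Dsin2 sqrtr1.
Qed.

Lemma norm_expi (t : R) : `|expi t| = 1.
Proof. by rewrite cabsE cabs_expi. Qed.

Lemma normXz1 (z : R[i]) (n : int) : `|z| = 1 -> `|z ^ n| = 1.
Proof.
move=> z1; case: n => k.
  by rewrite normrX z1 expr1n.

by rewrite /exprz normfV normrX z1 expr1n invr1.
Qed.

Lemma factor_q (q : {poly R[i]}) : q != 0 ->
  exists rs : seq R[i], size rs = laurent_wd q /\
   forall z, `|z| = 1 -> `|q.[z]| = `|laurent_lead q| * \prod_(a <- rs) `|z - a|.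
Proof.
move=> q0.
set k := low_index q.
have hasq : has (fun c => c != 0) q.
  apply/hasP; exists (lead_coef q); last by rewrite lead_coef_eq0.
  rewrite lead_coefE; apply: mem_nth.
  by rewrite prednK // size_poly_gt0.
have ksz : (k < size q)%N by rewrite /k /low_index -has_find.
have tk : take_poly k q = 0.
  apply/polyP => i; rewrite coef_take_poly coef0.
  case: ifP => // ik.
  by have := before_find 0 ik; move/negbFE/eqP.
set q1 := drop_poly k q.
have qE : q = q1 * 'X^k by rewrite -{1}(poly_take_drop k q) tk add0r.
have lq : lead_coef q1 = lead_coef q by rewrite qE lead_coef_Mmonic ?monicXn.
have [rs q1E] := closed_field_poly_normal q1.
have sq1 : size q1 = (size q - k)%N by rewrite size_drop_poly.
have lq0 : lead_coef q != 0 by rewrite lead_coef_eq0.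
exists rs; split.
  have := congr1 (fun p : {poly R[i]} => size p) q1E.
  rewrite size_scale ?lq // size_prod_XsubC sq1 /laurent_wd -/k => H.
  move: H; rewrite -subn1 subnAC => ->; by rewrite subn1.
move=> z z1.
have -> : q.[z] = q1.[z] * z ^+ k by rewrite {1}qE hornerM hornerXn.
rewrite normrM normrX z1 expr1n mulr1.
rewrite {1}q1E hornerZ horner_prod normrM lq normr_prod /laurent_lead; congr (_ * _).
by apply: eq_bigr => a _; rewrite hornerXsubC.
Qed.
Section Meas.
Local Open Scope ereal_scope.
Lemma leb_le (A B : set R) : A `<=` B -> lebesgue_measure A <= lebesgue_measure B.
Proof.
move=> AB.
rewrite /lebesgue_measure /lebesgue_stieltjes_measure /measure_extension.
exact: le_outer_measure.
Qed.
Lemma leb_U2 (A B : set R) : lebesgue_measure (A `|` B) <= lebesgue_measure A + lebesgue_measure B.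
Proof.
rewrite /lebesgue_measure /lebesgue_stieltjes_measure /measure_extension.
exact: outer_measureU2.
Qed.
Lemma leb_cc (a b : R) : (a <= b)%R -> lebesgue_measure `[a, b] = (b - a)%:E.
Proof. move=> ab. rewrite lebesgue_measure_itv /= lte_fin. 
case: ltgtP ab => //.  by move=> ->; rewrite subrr. Qed.
End Meas.

Lemma cabs_tri (x y a : R[i]) : cabs (x - y) <= cabs (x - a) + cabs (y - a).
Proof.
have -> : x - y = (x - a) + - (y - a) by rewrite opprB addrA subrK.
by rewrite /cabs -(normcN (y - a)); apply: le_normcD.
Qed.

Lemma arc_half (x0 m : R) (a : R[i]) : 0 <= m -> m <= 1 / 2 ->
  (lebesgue_measure [set t : R | (x0 <= t < x0 + pi)%R /\ (cabs (expi t - a) <= m)%R]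
    <= (5 * m)%:E)%E.
Proof.
move=> m0 m12.
have hpi := pi_ge2 R.
case: (pselect (exists t0, x0 <= t0 < x0 + pi /\ cabs (expi t0 - a) <= m)).
  move=> [t0 [/andP [ht0 ht0'] ha0]].
  apply: (@le_trans _ _ (lebesgue_measure `[t0 - 12 / 5 * m, t0 + 12 / 5 * m])).
    apply: leb_le => t [/andP [ht ht'] ha] /=.
    have hc : cabs (expi t - expi t0) <= 2 * m.
      by apply: le_trans (cabs_tri _ _ a) _; lra.
    rewrite chord in hc.
    have hw : `|(t - t0) / 2| < pi / 2.
      rewrite normrM (ger0_norm (_ : 0 <= 2^-1 :> R)) ?invr_ge0 ?ler0n //.
      rewrite ltr_pM2r ?invr_gt0 ?ltr0n //.
      rewrite ltr_norml; apply/andP; split; lra.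
    have := @sin_small _ m hw (_ : `|sin ((t - t0) / 2)| <= m) m12.
    move=> /(_ ltac:(lra)).
    rewrite normrM (ger0_norm (_ : 0 <= 2^-1 :> R)) ?invr_ge0 ?ler0n //.
    rewrite -ler_pdivlMr ?invr_gt0 ?ltr0n // invrK ler_norml => /andP [h1 h2].
    rewrite in_itv /=; apply/andP; split; lra.
  rewrite leb_cc; last by lra.
  rewrite lee_fin; lra.
move=> hn.
apply: (@le_trans _ _ (lebesgue_measure `[0, 0])).
  apply: leb_le => t ht; exfalso; apply: hn; exists t; exact: ht.
rewrite leb_cc // subrr lee_fin; lra.
Qed.
Lemma arc_full (m : R) (a : R[i]) : 0 <= m -> m <= 1 / 2 ->
  (lebesgue_measure [set t : R | (0 <= t < 2 * pi)%R /\ (cabs (expi t - a) <= m)%R]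
    <= (10 * m)%:E)%E.
Proof.
move=> m0 m12.
apply: (@le_trans _ _ (lebesgue_measure
   ([set t : R | (0 <= t < 0 + pi)%R /\ (cabs (expi t - a) <= m)%R] `|`
    [set t : R | (pi <= t < pi + pi)%R /\ (cabs (expi t - a) <= m)%R]))).
  apply: leb_le => t [/andP [h1 h2] h3].
  have [hp|hp] := ltP t pi.
    by left; split => //; rewrite add0r h1 hp.
  by right; split => //; rewrite hp /= -mulr2n -mulr_natl.
apply: le_trans (leb_U2 _ _) _.
have -> : (10 * m)%:E = ((5 * m)%:E + (5 * m)%:E)%E by rewrite -EFinD; congr EFin; ring.
by apply: leeD; apply: arc_half.
Qed.

Lemma arc_union (m : R) (rs : seq R[i]) : 0 <= m -> m <= 1 / 2 ->
  (lebesgue_measure [set t : R | (0 <= t < 2 * pi)%R /\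
     exists2 a, a \in rs & (cabs (expi t - a) <= m)%R]
    <= ((size rs)%:R * (10 * m))%:E)%E.
Proof.
move=> m0 m12; elim: rs => [|a rs IH].
  apply: (@le_trans _ _ (lebesgue_measure `[0, 0])).
    by apply: leb_le => t [_ [a]]; rewrite in_nil.
  by rewrite leb_cc // subrr mul0r.
apply: (@le_trans _ _ (lebesgue_measure
   ([set t : R | (0 <= t < 2 * pi)%R /\ (cabs (expi t - a) <= m)%R] `|`
    [set t : R | (0 <= t < 2 * pi)%R /\
     exists2 a, a \in rs & (cabs (expi t - a) <= m)%R]))).
  apply: leb_le => t [h1 [b]]; rewrite in_cons => /orP [/eqP ->|hb] hc.
    by left.
  by right; split => //; exists b.
apply: le_trans (leb_U2 _ _) _.
have -> : ((size (a :: rs))%:R * (10 * m))%:E = ((10 * m)%:E + ((size rs)%:R * (10 * m))%:E)%E.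
  by rewrite -EFinD; congr EFin; rewrite /= -addn1 natrD; ring.
by apply: leeD => //; apply: arc_full.
Qed.

Lemma eval_abs (n : int) (q : {poly R[i]}) : q != 0 ->
  exists rs : seq R[i], size rs = laurent_wd q /\
   forall t : R, cabs (laurent_eval n q (expi t)) =
     cabs (laurent_lead q) * \prod_(a <- rs) cabs (expi t - a).
Proof.
move=> q0; have [rs [hs hE]] := @factor_q q q0.
exists rs; split => // t.
apply: complexI.
rewrite -cabsE /laurent_eval normrM (@normXz1 _ n (norm_expi t)) mul1r.
rewrite (hE _ (norm_expi t)) rmorphM rmorph_prod /= -cabsE.
by congr (_ * _); apply: eq_bigr => a _; rewrite -cabsE.
Qed.

Lemma cabs_ge0 (z : R[i]) : 0 <= cabs z.
Proof. by case: z => a b; rewrite /cabs /=; apply: sqrtr_ge0. Qed.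

Lemma cabs_gt0 (z : R[i]) : z != 0 -> 0 < cabs z.
Proof.
move=> z0; rewrite lt_neqAle cabs_ge0 andbT eq_sym; apply/eqP => h.
by move/eqP: z0; apply; apply: Normc.eq0_normc.
Qed.

Lemma C_ge2 : 2 <= 8 * Num.sqrt 3 / Num.sqrt 47 :> R.
Proof.
have h47 : 0 < Num.sqrt 47 :> R by rewrite sqrtr_gt0 ltr0n.
rewrite ler_pdivlMr //.
have -> : 8 * Num.sqrt 3 = 2 * Num.sqrt 48 :> R.
  have -> : 48 = 4 ^+ 2 * 3 :> R by rewrite expr2; rewrite -!natrM.
  rewrite sqrtrM ?exprn_ge0 ?ler0n // sqrtr_sqr ger0_norm ?ler0n //.
  by rewrite mulrA -natrM.
rewrite ler_pM2l ?ltr0n // ler_sqrt ?ler0n //. lra.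

Qed.

Lemma D_meas : lebesgue_measure [set t : R | (0 <= t < 2 * pi)%R] = (2 * pi)%:E.
Proof.
have hpi := pi_ge2 R.
have -> : [set t : R | (0 <= t < 2 * pi)%R] = [set` `[0, 2 * pi[%R].
  by apply/seteqP; split => t /=; rewrite in_itv.
rewrite lebesgue_measure_itv /= lte_fin.
have -> : (0 < 2 * pi :> R) by lra.
by rewrite -EFinD subr0.
Qed.

Lemma prod_const_seq (rs : seq R[i]) (m : R) : \prod_(a <- rs) m = m ^+ size rs.
Proof. by elim: rs => [|a rs IH]; rewrite ?big_nil ?big_cons ?IH ?exprS. Qed.

Lemma main_aux (n : int) (q : {poly R[i]}) :
  q != 0 ->
  (laurent_wd q = 0%N ->
     (forall lam : R, 0 <= lam < cabs (laurent_lead q) ->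
        spec_density n q lam = 0%E) /\
     (forall lam : R, cabs (laurent_lead q) <= lam ->
        spec_density n q lam = 1%E)) /\
  ((1 <= laurent_wd q)%N ->
     forall lam : R, 0 <= lam ->
       (spec_density n q lam <=
        (8 * Num.sqrt 3 / Num.sqrt 47 * (laurent_wd q)%:R *
         (lam / cabs (laurent_lead q)) `^ ((laurent_wd q)%:R^-1))%:E)%E).
Proof.
move=> q0.
have [rs [hs hE]] := @eval_abs n q q0.
have L0 : 0 < cabs (laurent_lead q) by apply: cabs_gt0; rewrite /laurent_lead lead_coef_eq0.
set L := cabs (laurent_lead q) in L0 hE *.
have hpi := pi_ge2 R.
have hpi52 := pi_ge52.
rewrite /spec_density /haar_S1.
split.
  move=> hw0.
  have rs0 : rs = [::] by apply: size0nil; rewrite hs.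
  rewrite rs0 in hE.
  have hE' : forall t, cabs (laurent_eval n q (expi t)) = L.
    by move=> t; rewrite hE big_nil mulr1.
  split.
    move=> lam /andP [l0 lL].
    have -> : (lebesgue_measure ([set t : R | (0 <= t < 2 * pi)%R] `&`
        (@expi R) @^-1` [set z | (cabs (laurent_eval n q z) <= lam)%R])) = 0%E.
      apply/eqP; rewrite eq_le measure_ge0 andbT.
      apply: (@le_trans _ _ (lebesgue_measure `[0, 0])).
        apply: leb_le => t [_ /=]; rewrite hE' => h; by move: lL; rewrite ltNge h.
      by rewrite leb_cc // subrr.
    by rewrite mule0.
  move=> lam hl.
  have -> : ([set t : R | (0 <= t < 2 * pi)%R] `&`
        (@expi R) @^-1` [set z | (cabs (laurent_eval n q z) <= lam)%R]) =
        [set t : R | (0 <= t < 2 * pi)%R].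
    apply/seteqP; split => t /=; first by case.
    by move=> ht; split => //; rewrite /= hE'.
  rewrite D_meas -EFinM mulVf //.
  by apply: lt0r_neq0; lra.
move=> hw1 lam l0.
set d := laurent_wd q in hs hw1 *.
set m := (lam / L) `^ (d%:R^-1).
have m0 : 0 <= m by apply: powR_ge0.
have d1 : (1 <= d%:R :> R) by rewrite ler1n.
have C2 := C_ge2.
set C := 8 * Num.sqrt 3 / Num.sqrt 47 in C2 *.
have pi0 : 0 < (2 * pi)^-1 :> R by rewrite invr_gt0; lra.
have [hm|hm] := leP m (1 / 2).
  have hmd : m ^+ d = lam / L.
    rewrite -powR_mulrn // -powRrM mulVf ?powRr1 //.
      by apply: divr_ge0 => //; apply: ltW.
    by rewrite pnatr_eq0 -lt0n.
  apply: (@le_trans _ _ (((2 * pi)^-1)%:E * ((d%:R * (10 * m))%:E))%E).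
    apply: lee_wpmul2l; first by rewrite lee_fin ltW.
    rewrite -hs.
    apply: (le_trans _ (@arc_union m rs m0 hm)).
    apply: leb_le => t [ht /= hl]; split => //.
    case: (pselect (exists2 a, a \in rs & (cabs (expi t - a) <= m)%R)) => // hn.
    exfalso.
    have hlt : m ^+ size rs < \prod_(a <- rs) cabs (expi t - a).
      rewrite -(prod_const_seq rs m) !big_seq.
      apply: ltr_prod.
        apply/hasP; move: hs hw1; case: (rs) => [|a0 rs'] /= hs' hw1'.
          by move: hw1'; rewrite -hs'.
        by exists a0; rewrite ?mem_head.
      move=> a ha; rewrite m0 /=; rewrite ltNge; apply/negP => hc.
      by apply: hn; exists a.
    rewrite hs hmd in hlt; move: hl; rewrite hE => hl.
    have : L * (lam / L) < L * \prod_(a <- rs) cabs (expi t - a).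
      by rewrite ltr_pM2l.
    rewrite mulrCA divff ?mulr1; last by apply: lt0r_neq0.
    lra.
  rewrite -EFinM lee_fin. clearbody C m d.
  have -> : (2 * pi)^-1 * (d%:R * (10 * m)) = 5 / pi * (d%:R * m).
    by field; apply/lt0r_neq0; lra.
  have h5 : 5 / pi <= 2 :> R.
    by rewrite ler_pdivrMr; lra.
  have hdm : 0 <= d%:R * m by apply: mulr_ge0 => //; apply: ler0n.
  rewrite -[C * _ * _]mulrA; apply: (ler_wpM2r hdm); lra.
apply: (@le_trans _ _ (((2 * pi)^-1)%:E * (2 * pi)%:E)%E).
  apply: lee_wpmul2l; first by rewrite lee_fin ltW.
  by rewrite -D_meas; apply: leb_le; apply: subIsetl.
rewrite -EFinM mulVf; last by apply: lt0r_neq0; lra.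
rewrite lee_fin.
have Cd : 2 <= C * d%:R.
  by rewrite -[2]mulr1; apply: ler_pM => //; lra.
have : 2 * m <= C * d%:R * m by apply: ler_wpM2r.
lra.
Qed.
End S.

Theorem lemma2p3 (R : realType) (n : int) (q : {poly R[i]}) :
  q != 0 ->
  (laurent_wd q = 0%N ->
     (forall lam : R, 0 <= lam < cabs (laurent_lead q) ->
        spec_density n q lam = 0%E) /\
     (forall lam : R, cabs (laurent_lead q) <= lam ->
        spec_density n q lam = 1%E)) /\
  ((1 <= laurent_wd q)%N ->
     forall lam : R, 0 <= lam ->
       (spec_density n q lam <=
        (8 * Num.sqrt 3 / Num.sqrt 47 * (laurent_wd q)%:R *
         (lam / cabs (laurent_lead q)) `^ ((laurent_wd q)%:R^-1))%:E)%E).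
Proof. exact: (@main_aux R n q). Qed.
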